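(* Let $\succcurlyeq$ be a preference relation on the set $\mathcal{B}$ of bets over a propositional language $\mathcal{L}$. The following are equivalent: (1) $\succcurlyeq$ satisfies Non-Triviality and Objective Expected Utility; (2) $\succcurlyeq$ is represented by a subjective model of uncertainty $(\Omega,t,\lambda)$ with $\lambda$ additive.
   Context: Let $\mathbb{P}$ be a set of propositional variables containing two distinguished propositions $\mathbf{T}$ (''true'') and $\mathbf{F}$ (''false''), and let $\mathcal{L}=\mathcal{L}(\mathbb{P})$ be the language generated from $\mathbb{P}$ by $\neg,\land,\lor$. A bet is a function $b:\mathcal{L}\to[0,1]$ with finite support $\mathrm{supp}(b)=\{\phi: b(\phi)>0\}$ and $\sum_{\phi\in\mathrm{supp}(b)} b(\phi)=1$; the primitive bet $b_\phi$ assigns $1$ to $\phi$ and $0$ elsewhere. The set $\mathcal{B}$ of bets is a mixture space under pointwise mixtures. $\succcurlyeq$ is a binary relation on $\mathcal{B}$ with symmetric part $\sim$ and asymmetric part $\succ$. For a set $\Omega$, a truth valuation is a map $t:\mathcal{L}\to 2^\Omega$ with $t(\mathbf{T})=\Omega$, $t(\mathbf{F})=\emptyset$. For a field of sets $\Sigma\subseteq 2^\Omega$, a likelihood appraisal is a map $\lambda:\Sigma\to[0,1]$ with $\lambda(\emptyset)=0$, $\lambda(\Omega)=1$; it is additive if $\lambda(A\cup B)=\lambda(A)+\lambda(B)$ whenever $A,B\in\Sigma$ are disjoint. A subjective model of uncertainty is a triple $(\Omega,t,\lambda)$ with $t$ a truth valuation and $\lambda$ a likelihood appraisal on a field $\Sigma\supseteq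 t(\mathcal{L})$. It represents $\succcurlyeq$ if for all $b,b'\in\mathcal{B}$: $b\succcurlyeq b'$ iff $\sum_{\phi\in\mathrm{supp}(b)} b(\phi)\lambda(t(\phi))\ge \sum_{\phi\in\mathrm{supp}(b')} b'(\phi)\lambda(t(\phi))$. Non-Triviality: $b_{\mathbf{T}}\succcurlyeq b_\phi\succcurlyeq b_{\mathbf{F}}$ for all $\phi\in\mathcal{L}$, and $b_{\mathbf{T}}\succ b_{\mathbf{F}}$. Objective Expected Utility: $\succcurlyeq$ is complete and transitive and satisfies the Archimedean (continuity) axiom and the Independence axiom with respect to mixtures in $\mathcal{B}$. *)

(* Defs.v *)
From Stdlib Require Import Reals Lra List ClassicalEpsilon.
Import ListNotations.
Open Scope R_scope.
Set Implicit Arguments.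

Inductive form (P : Type) : Type :=
  | Var : P -> form P
  | Neg : form P -> form P
  | Conj : form P -> form P -> form P
  | Disj : form P -> form P -> form P.
Arguments Var {P} _.
Arguments Neg {P} _.
Arguments Conj {P} _ _.
Arguments Disj {P} _ _.

Fixpoint lsum {A : Type} (f : A -> R) (s : list A) : R :=
  match s with [] => 0 | x :: s' => f x + lsum f s' end.

Definition covers {P : Type} (b : form P -> R) (s : list (form P)) : Prop :=
  NoDup s /\ (forall phi, b phi > 0 -> In phi s).

(** A bet: b : L -> [0,1] with finite support and total mass 1
    (the sum over a duplicate-free list covering the support equals the sum
    over the support, since the other terms vanish). *)
Definition is_bet {P : Type} (b : form P -> R) : Prop :=
  (forall phi, 0 <= b phi <= 1) /\
  exists s, covers b s /\ lsum b s = 1.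

Definition prim_bet {P : Type} (phi : form P) : form P -> R :=
  fun psi => if excluded_middle_informative (psi = phi) then 1 else 0.

Definition mix {P : Type} (a : R) (b b' : form P -> R) : form P -> R :=
  fun phi => a * b phi + (1 - a) * b' phi.

Definition strict {X : Type} (pref : X -> X -> Prop) (x y : X) : Prop :=
  pref x y /\ ~ pref y x.

Definition NonTriviality {P : Type} (pT pF : P) (pref : (form P -> R) -> (form P -> R) -> Prop) : Prop :=
  (forall phi, pref (prim_bet (Var pT)) (prim_bet phi) /\
               pref (prim_bet phi) (prim_bet (Var pF))) /\
  strict pref (prim_bet (Var pT)) (prim_bet (Var pF)).

Definition ObjectiveEU {P : Type} (pref : (form P -> R) -> (form P -> R) -> Prop) : Prop :=
  (forall b b', is_bet b -> is_bet b' -> pref b b' \/ pref b' b) /\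
  (forall b b' b'', is_bet b -> is_bet b' -> is_bet b'' ->
     pref b b' -> pref b' b'' -> pref b b'') /\
  (forall b b' b'', is_bet b -> is_bet b' -> is_bet b'' ->
     strict pref b b' -> strict pref b' b'' ->
     exists a c, 0 < a < 1 /\ 0 < c < 1 /\
       strict pref (mix a b b'') b' /\ strict pref b' (mix c b b'')) /\
  (forall b b' b'' a, is_bet b -> is_bet b' -> is_bet b'' -> 0 < a < 1 ->
     (pref b b' <-> pref (mix a b b'') (mix a b' b''))).

Definition is_field {Omega : Type} (Sigma : (Omega -> Prop) -> Prop) : Prop :=
  Sigma (fun _ => True) /\
  (forall A, Sigma A -> Sigma (fun w => ~ A w)) /\
  (forall A B, Sigma A -> Sigma B -> Sigma (fun w => A w \/ B w)).

Definition truth_valuation {P Omega : Type} (pT pF : P)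
  (t : form P -> (Omega -> Prop)) : Prop :=
  t (Var pT) = (fun _ => True) /\ t (Var pF) = (fun _ => False).

Definition likelihood_appraisal {Omega : Type} (Sigma : (Omega -> Prop) -> Prop)
  (lam : (Omega -> Prop) -> R) : Prop :=
  (forall A, Sigma A -> 0 <= lam A <= 1) /\
  lam (fun _ => False) = 0 /\ lam (fun _ => True) = 1.

Definition additive {Omega : Type} (Sigma : (Omega -> Prop) -> Prop)
  (lam : (Omega -> Prop) -> R) : Prop :=
  forall A B, Sigma A -> Sigma B -> (forall w, ~ (A w /\ B w)) ->
    lam (fun w => A w \/ B w) = lam A + lam B.

(** Expected value: sum over supp(b) of b(phi) * u(phi), computed over any
    duplicate-free list covering the support (independent of the list). *)
Definition exp_value {P : Type} (b : form P -> R) (u : form P -> R) (s : list (form P)) : R :=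
  lsum (fun phi => b phi * u phi) s.

Definition represents {P Omega : Type} (t : form P -> (Omega -> Prop))
  (lam : (Omega -> Prop) -> R) (pref : (form P -> R) -> (form P -> R) -> Prop) : Prop :=
  forall b b', is_bet b -> is_bet b' ->
    forall s s', covers b s -> covers b' s' ->
      (pref b b' <-> exp_value b (fun phi => lam (t phi)) s >=
                     exp_value b' (fun phi => lam (t phi)) s').

Definition additive_subjective_representation {P : Type} (pT pF : P)
  (pref : (form P -> R) -> (form P -> R) -> Prop) : Prop :=
  exists (Omega : Type) (t : form P -> (Omega -> Prop))
         (Sigma : (Omega -> Prop) -> Prop) (lam : (Omega -> Prop) -> R),
    truth_valuation pT pF t /\ is_field Sigma /\ (forall phi, Sigma (t phi)) /\
    likelihood_appraisal Sigma lam /\ additive Sigma lam /\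
    represents t lam pref.

(* Main.v *)
Require Import Defs.
From Stdlib Require Import Reals.
From Stdlib Require Import Reals Lra List ClassicalEpsilon FunctionalExtensionality.

Open Scope R_scope.

Lemma lsum_ext_in {A} (f g : A -> R) s :
  (forall x, In x s -> f x = g x) -> lsum f s = lsum g s.
Proof.
  induction s as [|x s IH]; cbn [lsum]; intros H; auto.
  rewrite (H x (or_introl eq_refl)). rewrite IH; auto. intros y Hy; apply H; right; auto.
Qed.

Lemma lsum_lin {A} (f g : A -> R) a c s :
  lsum (fun x => a * f x + c * g x) s = a * lsum f s + c * lsum g s.
Proof. induction s; cbn [lsum]; [ring| rewrite IHs; ring]. Qed.

Lemma lsum_scal {A} (f : A -> R) c s :
  lsum (fun x => f x * c) s = lsum f s * c.
Proof. induction s; cbn [lsum]; [ring| rewrite IHs; ring]. Qed.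

Lemma lsum_le {A} (f g : A -> R) s :
  (forall x, In x s -> f x <= g x) -> lsum f s <= lsum g s.
Proof.
  induction s as [|x s IH]; cbn [lsum]; intros H; [lra|].
  pose proof (H x (or_introl eq_refl)) as H1.
  assert (lsum f s <= lsum g s) by (apply IH; intros; apply H; right; auto). lra.
Qed.

Lemma lsum_const0 {A} (s : list A) : lsum (fun _ => 0) s = 0.
Proof. induction s; cbn [lsum]; [ring| rewrite IHs; ring]. Qed.

Lemma lsum_zero {A} (f : A -> R) s : (forall x, In x s -> f x = 0) -> lsum f s = 0.
Proof. intros H. rewrite (lsum_ext_in f (fun _ => 0)); auto. apply lsum_const0. Qed.

Lemma lsum_nonneg {A} (f : A -> R) s : (forall x, In x s -> 0 <= f x) -> 0 <= lsum f s.
Proof. intros H. rewrite <- (lsum_const0 s). apply lsum_le; auto. Qed.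

Lemma lsum_ge_elem {A} (f : A -> R) s x :
  (forall y, In y s -> 0 <= f y) -> In x s -> f x <= lsum f s.
Proof.
  induction s as [|y s IH]; cbn [lsum]; intros H Hx; [contradiction|].
  destruct Hx as [<-|Hx].
  - assert (0 <= lsum f s) by (apply lsum_nonneg; intros; apply H; right; auto). lra.
  - assert (f x <= lsum f s) by (apply IH; auto; intros; apply H; right; auto).
    pose proof (H y (or_introl eq_refl)). lra.
Qed.

Definition zap {A} (f : A -> R) (x : A) : A -> R :=
  fun y => if excluded_middle_informative (y = x) then 0 else f y.

Lemma lsum_pick {A} (f : A -> R) s x :
  NoDup s -> In x s -> lsum f s = f x + lsum (zap f x) s.
Proof.
  induction s as [|y s IH]; cbn [lsum]; intros Hnd Hin; [contradiction|].
  inversion Hnd as [|? ? Hy Hnd']; subst.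
  destruct (excluded_middle_informative (y = x)) as [e|n].
  - subst y. unfold zap at 1.
    destruct (excluded_middle_informative (x = x)) as [_|c]; [|congruence].
    rewrite (lsum_ext_in (zap f x) f); [ring|].
    intros z Hz. unfold zap. destruct (excluded_middle_informative (z = x)); auto.
    subst; contradiction.
  - destruct Hin as [e|Hin]; [contradiction|]. rewrite (IH Hnd' Hin).
    unfold zap at 2. destruct (excluded_middle_informative (y = x)); [contradiction|]. ring.
Qed.

Lemma lsum_inv {A} (s1 : list A) : forall (s2 : list A) (f : A -> R),
  NoDup s1 -> NoDup s2 ->
  (forall y, f y <> 0 -> In y s1) -> (forall y, f y <> 0 -> In y s2) ->
  lsum f s1 = lsum f s2.
Proof.
  induction s1 as [|x r IH]; intros s2 f N1 N2 H1 H2; cbn [lsum].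
  - symmetry. apply lsum_zero. intros y _.
    destruct (Req_dec (f y) 0) as [e|n]; auto. exfalso; exact (H1 y n).
  - inversion N1 as [|? ? Hx Nr]; subst.
    destruct (excluded_middle_informative (In x s2)) as [Hin|Hnin].
    + rewrite (lsum_pick f s2 x N2 Hin).
      rewrite (lsum_ext_in f (zap f x) r).
      * f_equal. apply IH; auto.
        -- intros y Hy. unfold zap in Hy.
           destruct (excluded_middle_informative (y = x)) as [e|n]; [congruence|].
           destruct (H1 y Hy) as [e|i]; [congruence|auto].
        -- intros y Hy. unfold zap in Hy.
           destruct (excluded_middle_informative (y = x)) as [e|n]; [congruence|].
           apply H2; auto.
      * intros z Hz. unfold zap. destruct (excluded_middle_informative (z = x)); auto.
        subst; contradiction.
    + assert (Hfx : f x = 0).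
      { destruct (Req_dec (f x) 0) as [e|n]; auto. exfalso; apply Hnin; apply H2; auto. }
      rewrite Hfx, Rplus_0_l. apply IH; auto.
      intros y Hy. destruct (H1 y Hy) as [e|i]; auto. subst. exfalso; apply Hnin; apply H2; auto.
Qed.

Lemma dedup {A} (l : list A) : exists s, NoDup s /\ forall x, In x s <-> In x l.
Proof.
  induction l as [|a l [s [Hs Hi]]].
  - exists nil; split; [constructor| simpl; tauto].
  - destruct (excluded_middle_informative (In a s)) as [i|n].
    + exists s; split; auto. intros x; split; intro H.
      * right; apply Hi; auto.
      * destruct H as [<-|H]; [exact i | apply Hi; auto].
    + exists (a :: s); split; [constructor; auto|]. intros x; simpl; rewrite Hi; tauto.
Qed.

Lemma pos_of_nz (x : R) : 0 <= x -> x <> 0 -> x > 0.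
Proof. intros H1 H2. destruct (Rle_lt_or_eq_dec _ _ H1); auto. congruence. Qed.

Lemma bet_cover_sum {P} (b : form P -> R) s : is_bet b -> covers b s -> lsum b s = 1.
Proof.
  intros [Hb [s0 [[N0 C0] S0]]] [N C]. rewrite <- S0. apply lsum_inv; auto; intros y Hy.
  - apply C. apply pos_of_nz; auto. apply Hb.
  - apply C0. apply pos_of_nz; auto. apply Hb.
Qed.

Lemma exp_inv {P} (b : form P -> R) w s s' :
  is_bet b -> covers b s -> covers b s' -> exp_value b w s = exp_value b w s'.
Proof.
  intros [Hb _] [N C] [N' C']. unfold exp_value. apply lsum_inv; auto; intros y Hy.
  - apply C. apply pos_of_nz; [apply Hb|]. intro e; apply Hy; rewrite e; ring.
  - apply C'. apply pos_of_nz; [apply Hb|]. intro e; apply Hy; rewrite e; ring.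
Qed.

Lemma mix_pos {P} (b b' : form P -> R) a phi :
  0 <= a <= 1 -> 0 <= b phi -> 0 <= b' phi -> mix a b b' phi > 0 -> b phi > 0 \/ b' phi > 0.
Proof.
  unfold mix; intros Ha H1 H2 H.
  destruct (Rle_lt_or_eq_dec _ _ H1) as [p|e]; [left; auto|].
  destruct (Rle_lt_or_eq_dec _ _ H2) as [p'|e']; [right; auto|].
  rewrite <- e, <- e' in H. lra.
Qed.

Lemma mix_bet {P} (b b' : form P -> R) a :
  is_bet b -> is_bet b' -> 0 <= a <= 1 -> is_bet (mix a b b').
Proof.
  intros Hb Hb' Ha.
  pose proof Hb as [Bb [s [Cs Ss]]]. pose proof Hb' as [Bb' [s' [Cs' Ss']]].
  destruct (dedup (s ++ s')) as [s2 [N2 I2]].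
  assert (Cb : covers b s2).
  { split; auto. intros phi Hp. apply I2. apply in_or_app. left. apply Cs; auto. }
  assert (Cb' : covers b' s2).
  { split; auto. intros phi Hp. apply I2. apply in_or_app. right. apply Cs'; auto. }
  split.
  - intros phi. unfold mix. destruct (Bb phi), (Bb' phi). split; nra.
  - exists s2. split.
    + split; auto. intros phi Hp.
      destruct (mix_pos b b' a phi Ha (proj1 (Bb phi)) (proj1 (Bb' phi)) Hp).
      * apply Cb; auto.
      * apply Cb'; auto.
    + unfold mix. rewrite lsum_lin.
      rewrite (bet_cover_sum b s2 Hb Cb), (bet_cover_sum b' s2 Hb' Cb'). ring.
Qed.

Lemma mix_exp {P} (b b' : form P -> R) a w s s' s2 :
  is_bet b -> is_bet b' -> 0 <= a <= 1 -> covers b s -> covers b' s' ->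
  covers (mix a b b') s2 ->
  exp_value (mix a b b') w s2 = a * exp_value b w s + (1 - a) * exp_value b' w s'.
Proof.
  intros Hb Hb' Ha Cs Cs' Cs2.
  destruct (dedup (s ++ s' ++ s2)) as [s3 [N3 I3]].
  assert (Cb : covers b s3).
  { split; auto. intros phi Hp. apply I3. apply in_or_app. left. apply Cs; auto. }
  assert (Cb' : covers b' s3).
  { split; auto. intros phi Hp. apply I3. apply in_or_app. right. apply in_or_app. left.
    apply Cs'; auto. }
  assert (Cm : covers (mix a b b') s3).
  { split; auto. intros phi Hp. apply I3. apply in_or_app. right. apply in_or_app. right.
    apply Cs2; auto. }
  rewrite (exp_inv _ w s2 s3 (mix_bet b b' a Hb Hb' Ha) Cs2 Cm).
  rewrite (exp_inv b w s s3 Hb Cs Cb), (exp_inv b' w s' s3 Hb' Cs' Cb').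
  unfold exp_value, mix.
  rewrite <- lsum_lin. apply lsum_ext_in. intros; ring.
Qed.

Lemma prim_same {P} (phi : form P) : prim_bet phi phi = 1.
Proof. unfold prim_bet. destruct (excluded_middle_informative (phi = phi)); congruence. Qed.

Lemma prim_other {P} (phi psi : form P) : psi <> phi -> prim_bet phi psi = 0.
Proof. unfold prim_bet. destruct (excluded_middle_informative (psi = phi)); congruence. Qed.

Lemma prim_cover {P} (phi : form P) : covers (prim_bet phi) (phi :: nil).
Proof.
  split. { constructor; [simpl; tauto| constructor]. }
  intros psi H. destruct (excluded_middle_informative (psi = phi)) as [e|n].
  - left; auto.
  - rewrite prim_other in H; auto. lra.
Qed.

Lemma prim_bet_is {P} (phi : form P) : is_bet (prim_bet phi).
Proof.
  split.
  - intros psi. destruct (excluded_middle_informative (psi = phi)) as [e|n].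
    + subst; rewrite prim_same; lra.
    + rewrite prim_other; auto; lra.
  - exists (phi :: nil). split; [apply prim_cover|]. cbn [lsum]. rewrite prim_same. ring.
Qed.

Lemma prim_exp {P} (phi : form P) w : exp_value (prim_bet phi) w (phi :: nil) = w phi.
Proof. unfold exp_value. cbn [lsum]. rewrite prim_same. ring. Qed.

Lemma bet_has_cover {P} (b : form P -> R) : is_bet b -> exists s, covers b s.
Proof. intros [_ [s [C _]]]; eauto. Qed.

Lemma rep_to_axioms (P : Type) (pT pF : P) pref :
  additive_subjective_representation pT pF pref ->
  NonTriviality pT pF pref /\ ObjectiveEU pref.
Proof.
  intros [Omega [t [Sigma [lam [[tT tF] [Hf [Ht [[L01 [L0 L1]] [Hadd Hrep]]]]]]]]].
  set (v := fun phi => lam (t phi)).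
  assert (Hv : forall phi, 0 <= v phi <= 1) by (intros; apply L01; apply Ht).
  assert (vT : v (Var pT) = 1) by (unfold v; rewrite tT; exact L1).
  assert (vF : v (Var pF) = 0) by (unfold v; rewrite tF; exact L0).
  assert (Hpr : forall phi psi, pref (prim_bet phi) (prim_bet psi) <-> v phi >= v psi).
  { intros phi psi. rewrite (Hrep _ _ (prim_bet_is phi) (prim_bet_is psi) _ _
       (prim_cover phi) (prim_cover psi)).
    rewrite !prim_exp. tauto. }
  split.
  - split.
    + intros phi. rewrite !Hpr. rewrite vT, vF. pose proof (Hv phi). lra.
    + split; [rewrite Hpr| rewrite Hpr]; rewrite vT, vF; lra.
  - split; [|split; [|split]].
    + intros b b' Hb Hb'.
      destruct (bet_has_cover b Hb) as [s Cs]. destruct (bet_has_cover b' Hb') as [s' Cs'].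
      rewrite (Hrep b b' Hb Hb' s s' Cs Cs'), (Hrep b' b Hb' Hb s' s Cs' Cs). lra.
    + intros b b' b'' Hb Hb' Hb''.
      destruct (bet_has_cover b Hb) as [s Cs]. destruct (bet_has_cover b' Hb') as [s' Cs'].
      destruct (bet_has_cover b'' Hb'') as [s'' Cs''].
      rewrite (Hrep b b' Hb Hb' s s' Cs Cs'), (Hrep b' b'' Hb' Hb'' s' s'' Cs' Cs''),
        (Hrep b b'' Hb Hb'' s s'' Cs Cs''). lra.
    + intros b b' b'' Hb Hb' Hb'' [H1 H2] [H3 H4].
      destruct (bet_has_cover b Hb) as [s Cs]. destruct (bet_has_cover b' Hb') as [s' Cs'].
      destruct (bet_has_cover b'' Hb'') as [s'' Cs''].
      rewrite (Hrep b b' Hb Hb' s s' Cs Cs') in H1.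
      rewrite (Hrep b' b Hb' Hb s' s Cs' Cs) in H2.
      rewrite (Hrep b' b'' Hb' Hb'' s' s'' Cs' Cs'') in H3.
      rewrite (Hrep b'' b' Hb'' Hb' s'' s' Cs'' Cs') in H4.
      fold v in H1, H2, H3, H4.
      set (e := exp_value b v s) in *. set (e' := exp_value b' v s') in *.
      set (e'' := exp_value b'' v s'') in *.
      assert (Hlt1 : e > e') by lra. assert (Hlt2 : e' > e'') by lra.
      set (D := e - e'').
      set (d := (e' - e'') / D).
      assert (HdD : d * D = e' - e'') by (unfold d; field; unfold D; lra).
      assert (Hd : 0 < d < 1) by (unfold D in *; split; nra).
      exists ((1 + d) / 2), (d / 2).
      assert (Ha : 0 < (1 + d) / 2 < 1) by lra. assert (Hc : 0 < d / 2 < 1) by lra.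
      assert (Hma : is_bet (mix ((1 + d) / 2) b b'')) by (apply mix_bet; auto; lra).
      assert (Hmc : is_bet (mix (d / 2) b b'')) by (apply mix_bet; auto; lra).
      destruct (bet_has_cover _ Hma) as [sa Ca]. destruct (bet_has_cover _ Hmc) as [sc Cc].
      assert (Ea : exp_value (mix ((1 + d) / 2) b b'') v sa = (1 + d) / 2 * e + (1 - (1 + d) / 2) * e'')
        by (apply mix_exp; auto; lra).
      assert (Ec : exp_value (mix (d / 2) b b'') v sc = d / 2 * e + (1 - d / 2) * e'')
        by (apply mix_exp; auto; lra).
      assert (HD : D = e - e'') by reflexivity.
      assert (Ka : (1 + d) / 2 * e + (1 - (1 + d) / 2) * e'' = e'' + (D + d * D) / 2)
        by (rewrite HD; clear -HD; field).
      assert (Kc : d / 2 * e + (1 - d / 2) * e'' = e'' + (d * D) / 2)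
        by (rewrite HD; clear -HD; field).
      rewrite HdD in Ka, Kc.
      split; [|split; [|split]]; auto.
      * split.
        -- rewrite (Hrep _ _ Hma Hb' sa s' Ca Cs'). fold v. change (exp_value b' v s') with e'. rewrite Ea, Ka. lra.
        -- rewrite (Hrep _ _ Hb' Hma s' sa Cs' Ca). fold v. change (exp_value b' v s') with e'. rewrite Ea, Ka. lra.
      * split.
        -- rewrite (Hrep _ _ Hb' Hmc s' sc Cs' Cc). fold v. change (exp_value b' v s') with e'. rewrite Ec, Kc. lra.
        -- rewrite (Hrep _ _ Hmc Hb' sc s' Cc Cs'). fold v. change (exp_value b' v s') with e'. rewrite Ec, Kc. lra.
    + intros b b' b'' a Hb Hb' Hb'' Ha.
      destruct (bet_has_cover b Hb) as [s Cs]. destruct (bet_has_cover b' Hb') as [s' Cs'].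
      destruct (bet_has_cover b'' Hb'') as [s'' Cs''].
      assert (Hm1 : is_bet (mix a b b'')) by (apply mix_bet; auto; lra).
      assert (Hm2 : is_bet (mix a b' b'')) by (apply mix_bet; auto; lra).
      destruct (bet_has_cover _ Hm1) as [s1 C1]. destruct (bet_has_cover _ Hm2) as [s2 C2].
      rewrite (Hrep b b' Hb Hb' s s' Cs Cs'), (Hrep _ _ Hm1 Hm2 s1 s2 C1 C2).
      rewrite (mix_exp b b'' a _ s s'' s1), (mix_exp b' b'' a _ s' s'' s2); auto; try lra.
      split; intro H; nra.
Qed.

Definition MM {P} (pT pF : P) (a : R) : form P -> R :=
  mix a (prim_bet (Var pT)) (prim_bet (Var pF)).

Definition indiff {X} (pref : X -> X -> Prop) (x y : X) : Prop := pref x y /\ pref y x.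

Lemma mix_1 {P} (x y : form P -> R) : mix 1 x y = x.
Proof. apply functional_extensionality; intro; unfold mix; ring. Qed.
Lemma mix_0 {P} (x y : form P -> R) : mix 0 x y = y.
Proof. apply functional_extensionality; intro; unfold mix; ring. Qed.
Lemma mix_same {P} a (x : form P -> R) : mix a x x = x.
Proof. apply functional_extensionality; intro; unfold mix; ring. Qed.
Lemma mix_comm {P} a (x y : form P -> R) : mix a x y = mix (1 - a) y x.
Proof. apply functional_extensionality; intro; unfold mix; ring. Qed.
Lemma mix_MM {P} (pT pF : P) a al be :
  mix a (MM pT pF al) (MM pT pF be) = MM pT pF (a * al + (1 - a) * be).
Proof. apply functional_extensionality; intro; unfold MM, mix; ring. Qed.
Lemma MM_1 {P} (pT pF : P) : MM pT pF 1 = prim_bet (Var pT).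
Proof. apply mix_1. Qed.
Lemma MM_0 {P} (pT pF : P) : MM pT pF 0 = prim_bet (Var pF).
Proof. apply mix_0. Qed.

Lemma MM_bet {P} (pT pF : P) a : 0 <= a <= 1 -> is_bet (MM pT pF a).
Proof. intros; apply mix_bet; auto; apply prim_bet_is. Qed.

Definition AX {P} (pT pF : P) pref := NonTriviality pT pF pref /\ ObjectiveEU pref.

Lemma ax_refl {P} (pT pF : P) pref x : AX pT pF pref -> is_bet x -> pref x x.
Proof. intros [_ [Hc _]] Hx. destruct (Hc x x Hx Hx); auto. Qed.

Lemma ax_trans {P} (pT pF : P) pref x y z : AX pT pF pref -> is_bet x -> is_bet y -> is_bet z ->
  pref x y -> pref y z -> pref x z.
Proof. intros [_ [_ [Ht _]]]; eauto. Qed.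

Lemma ax_not {P} (pT pF : P) pref x y : AX pT pF pref -> is_bet x -> is_bet y ->
  ~ pref x y -> strict pref y x.
Proof. intros [_ [Hc _]] Hx Hy H. split; auto. destruct (Hc x y Hx Hy); tauto. Qed.

Lemma indep_strict {P} (pT pF : P) pref a x y z : AX pT pF pref -> 0 < a < 1 ->
  is_bet x -> is_bet y -> is_bet z ->
  strict pref x y -> strict pref (mix a x z) (mix a y z).
Proof.
  intros [_ [_ [_ [_ Hi]]]] Ha Hx Hy Hz [H1 H2]. split.
  - apply Hi; auto.
  - intro H. apply H2. apply (Hi y x z a); auto.
Qed.

Lemma mono_strict {P} (pT pF : P) pref al be : AX pT pF pref -> 0 <= be -> be < al -> al <= 1 ->
  strict pref (MM pT pF al) (MM pT pF be).
Proof.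
  intros H Hb Hba Ha.
  assert (Step1 : forall g, 0 < g <= 1 -> strict pref (MM pT pF g) (MM pT pF 0)).
  { intros g Hg. destruct (Req_dec g 1) as [e|n].
    - subst g. rewrite MM_1, MM_0. apply H.
    - rewrite MM_0. rewrite <- (mix_same g (prim_bet (Var pF))).
      change (MM pT pF g) with (mix g (prim_bet (Var pT)) (prim_bet (Var pF))).
      apply (indep_strict pT pF); auto; try apply prim_bet_is. lra.
      apply H. }
  destruct (Req_dec be 0) as [e|n].
  - subst be. apply Step1; lra.
  - set (c := 1 - be / al).
    assert (Hc : 0 < c < 1).
    { unfold c. assert (0 < be / al < 1); [|lra].
      split; [apply Rdiv_lt_0_compat; lra|]. apply (Rmult_lt_reg_r al); [lra|].
      unfold Rdiv; rewrite Rmult_assoc, Rinv_l; lra. }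
    assert (Hbe : MM pT pF be = mix c (MM pT pF 0) (MM pT pF al)).
    { rewrite mix_MM. f_equal. unfold c. field. lra. }
    rewrite Hbe. rewrite <- (mix_same c (MM pT pF al)) at 1.
    apply (indep_strict pT pF); auto; try (apply MM_bet; lra).
    apply Step1; lra.
Qed.

Lemma mono_iff {P} (pT pF : P) pref al be : AX pT pF pref -> 0 <= al <= 1 -> 0 <= be <= 1 ->
  (pref (MM pT pF al) (MM pT pF be) <-> be <= al).
Proof.
  intros H Ha Hb. split; intro K.
  - destruct (Rle_lt_dec be al) as [l|l]; auto.
    exfalso. destruct (mono_strict pT pF pref be al H) as [_ N]; try lra. auto.
  - destruct (Req_dec be al) as [e|n].
    + subst; apply (ax_refl pT pF); auto; apply MM_bet; auto.
    + apply (mono_strict pT pF pref al be H); lra.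
Qed.

Lemma indiff_trans {P} (pT pF : P) pref x y z : AX pT pF pref -> is_bet x -> is_bet y -> is_bet z ->
  indiff pref x y -> indiff pref y z -> indiff pref x z.
Proof.
  intros H Hx Hy Hz [A1 A2] [B1 B2]. split.
  - apply (ax_trans pT pF pref x y z); auto.
  - apply (ax_trans pT pF pref z y x); auto.
Qed.

Lemma indiff_mix_l {P} (pT pF : P) pref a x x' z : AX pT pF pref -> 0 <= a <= 1 ->
  is_bet x -> is_bet x' -> is_bet z ->
  indiff pref x x' -> indiff pref (mix a x z) (mix a x' z).
Proof.
  intros H Ha Hx Hx' Hz [K1 K2].
  destruct (Req_dec a 0) as [e|n].
  - subst. rewrite !mix_0. split; apply (ax_refl pT pF); auto.
  - destruct (Req_dec a 1) as [e1|n1].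
    + subst. rewrite !mix_1. split; auto.
    + destruct H as [NT [Hc [Ht [Ha' Hi]]]]. split; apply Hi; auto; lra.
Qed.

Lemma indiff_mix_r {P} (pT pF : P) pref a x y y' : AX pT pF pref -> 0 <= a <= 1 ->
  is_bet x -> is_bet y -> is_bet y' ->
  indiff pref y y' -> indiff pref (mix a x y) (mix a x y').
Proof.
  intros H Ha Hx Hy Hy' K. rewrite (mix_comm a x y), (mix_comm a x y').
  apply (indiff_mix_l pT pF); auto; lra.
Qed.

Lemma lin_indiff {P} (pT pF : P) pref a x y al be : AX pT pF pref -> 0 <= a <= 1 ->
  0 <= al <= 1 -> 0 <= be <= 1 -> is_bet x -> is_bet y ->
  indiff pref x (MM pT pF al) -> indiff pref y (MM pT pF be) ->
  indiff pref (mix a x y) (MM pT pF (a * al + (1 - a) * be)).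
Proof.
  intros H Ha Hal Hbe Hx Hy Kx Ky.
  assert (Bal := MM_bet pT pF al Hal). assert (Bbe := MM_bet pT pF be Hbe).
  rewrite <- mix_MM.
  apply (indiff_trans pT pF pref _ (mix a (MM pT pF al) y)); auto;
    try (apply mix_bet; auto).
  - apply (indiff_mix_l pT pF); auto.
  - apply (indiff_mix_r pT pF); auto.
Qed.

Lemma exist_level {P} (pT pF : P) pref x : AX pT pF pref -> is_bet x ->
  pref (prim_bet (Var pT)) x -> pref x (prim_bet (Var pF)) ->
  exists al, 0 <= al <= 1 /\ indiff pref x (MM pT pF al).
Proof.
  intros H Hx HT HF.
  set (E := fun al => 0 <= al <= 1 /\ pref x (MM pT pF al)).
  assert (E0 : E 0) by (split; [lra| rewrite MM_0; auto]).
  assert (Eb : bound E) by (exists 1; intros y [Hy _]; lra).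
  destruct (completeness E Eb (ex_intro _ 0 E0)) as [m [Hub Hlub]].
  assert (m0 : 0 <= m) by (apply Hub; auto).
  assert (m1 : m <= 1) by (apply Hlub; intros y [Hy _]; lra).
  assert (Bm : is_bet (MM pT pF m)) by (apply MM_bet; lra).
  pose proof H as [NT [Hc [Ht [Har Hi]]]].
  exists m; split; [lra|]. split.
  -
    destruct (excluded_middle_informative (pref x (MM pT pF m))) as [K|K]; auto.
    exfalso.
    assert (Sm : strict pref (MM pT pF m) x) by (apply (ax_not pT pF); auto).
    assert (mz : m <= 0).
    { destruct (excluded_middle_informative (pref (prim_bet (Var pF)) x)) as [L|L].
      - apply Hlub. intros al [Hal Hp].
        destruct (Rle_lt_dec al 0) as [l|l]; auto. exfalso.
        destruct (mono_strict pT pF pref al 0 H) as [_ N]; try lra.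
        apply N. rewrite MM_0.
        apply (ax_trans pT pF pref _ x); auto; try apply prim_bet_is; apply MM_bet; lra.
      - assert (Sx : strict pref x (prim_bet (Var pF)))
          by (apply (ax_not pT pF); auto; apply prim_bet_is).
        destruct (Har _ _ _ Bm Hx (prim_bet_is _) Sm Sx) as [a [c [Ha [_ [[S1 S2] _]]]]].
        rewrite <- (MM_0 pT pF), mix_MM in S1, S2.
        replace (a * m + (1 - a) * 0) with (a * m) in S1, S2 by ring.
        assert (Hub' : m <= a * m).
        { apply Hlub. intros al [Hal Hp].
          destruct (Rle_lt_dec al (a * m)) as [l|l]; auto. exfalso.
          destruct (mono_strict pT pF pref al (a * m) H) as [M1 _]; try nra.
          apply S2. apply (ax_trans pT pF pref _ (MM pT pF al)); auto; apply MM_bet; nra. }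
        nra. }
    apply K. replace m with 0 by lra. rewrite MM_0; auto.
  -
    destruct (excluded_middle_informative (pref (MM pT pF m) x)) as [K|K]; auto.
    exfalso.
    assert (Sm : strict pref x (MM pT pF m)) by (apply (ax_not pT pF); auto).
    assert (mo : 1 <= m).
    { destruct (excluded_middle_informative (pref x (prim_bet (Var pT)))) as [L|L].
      - apply Hub. split; [lra|]. rewrite MM_1; auto.
      - assert (Sx : strict pref (prim_bet (Var pT)) x)
          by (apply (ax_not pT pF); auto; apply prim_bet_is).
        destruct (Har _ _ _ (prim_bet_is _) Hx Bm Sx Sm) as [a [c [_ [Hc' [_ [S1 S2]]]]]].
        rewrite <- (MM_1 pT pF), mix_MM in S1, S2.
        assert (Hin : c * 1 + (1 - c) * m <= m).
        { apply Hub. split; [nra|]. auto. }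
        nra. }
    apply K. replace m with 1 by lra. rewrite MM_1; auto.
Qed.

Lemma val_bounds {P} (b u : form P -> R) s : (forall psi, 0 <= b psi <= 1) ->
  (forall psi, 0 <= u psi <= 1) -> lsum b s = 1 ->
  0 <= lsum (fun psi => b psi * u psi) s <= 1.
Proof.
  intros Hb Hu Hs. split.
  - apply lsum_nonneg. intros x _. destruct (Hb x), (Hu x). nra.
  - rewrite <- Hs. apply lsum_le. intros x _. destruct (Hb x), (Hu x). nra.
Qed.

Lemma div_bounds (x d : R) : 0 <= x -> x <= d -> 0 < d -> 0 <= x / d <= 1.
Proof.
  intros H1 H2 H3. split.
  - unfold Rdiv. apply Rmult_le_pos; auto. left; apply Rinv_0_lt_compat; auto.
  - apply (Rmult_le_reg_r d); auto. unfold Rdiv. rewrite Rmult_assoc, Rinv_l; lra.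
Qed.

Lemma key {P} (pT pF : P) pref (u : form P -> R) : AX pT pF pref ->
  (forall phi, 0 <= u phi <= 1 /\ indiff pref (prim_bet phi) (MM pT pF (u phi))) ->
  forall s b, (forall psi, 0 <= b psi <= 1) -> covers b s -> lsum b s = 1 ->
  indiff pref b (MM pT pF (lsum (fun psi => b psi * u psi) s)).
Proof.
  intros H Hu. assert (Hu01 : forall psi, 0 <= u psi <= 1) by (intros; apply Hu).
  induction s as [|phi r IH]; intros b Hb [N C] Hs.
  { cbn [lsum] in Hs. lra. }
  inversion N as [|? ? Hphi Nr]; subst.
  cbn [lsum] in Hs |- *.
  assert (Hbet : is_bet b) by (split; auto; exists (phi :: r); split; [split|]; auto).
  assert (Hr : forall psi, psi <> phi -> b psi <> 0 -> In psi r).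
  { intros psi n nz. destruct (C psi) as [e|i]; auto.
    - apply pos_of_nz; auto. apply Hb.
    - congruence. }
  assert (Hle : forall psi, In psi r -> b psi <= lsum b r).
  { intros psi Hin. apply lsum_ge_elem; auto. intros; apply Hb. }
  remember (b phi) as p eqn:Hp.
  destruct (Req_dec p 1) as [e1|n1].
  -
    assert (Z : forall psi, In psi r -> b psi = 0).
    { intros psi Hin. pose proof (Hle psi Hin). pose proof (Hb psi). lra. }
    rewrite (lsum_zero (fun psi => b psi * u psi) r)
      by (intros psi Hin; rewrite Z; auto; ring).
    assert (Eb : b = prim_bet phi).
    { apply functional_extensionality; intro psi.
      destruct (excluded_middle_informative (psi = phi)) as [e|n].
      - subst. rewrite prim_same. congruence.
      - rewrite prim_other; auto. destruct (Req_dec (b psi) 0) as [z|nz]; auto.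
        all: try (apply Z; apply Hr; auto). }
    rewrite e1, Rmult_1_l, Rplus_0_r. rewrite Eb. apply Hu.
  - assert (p1 : p < 1).
    { destruct (Hb phi). assert (p <= 1) by (subst; auto). lra. }
    assert (p0 : 0 <= p) by (subst; apply Hb).
    assert (Sr : lsum b r = 1 - p) by lra.
    set (b' := fun psi => if excluded_middle_informative (psi = phi) then 0 else b psi / (1 - p)).
    assert (E' : forall psi, In psi r -> b' psi = b psi * / (1 - p)).
    { intros psi Hin. unfold b'. destruct (excluded_middle_informative (psi = phi)).
      - subst; contradiction.
      - reflexivity. }
    assert (Hb'01 : forall psi, 0 <= b' psi <= 1).
    { intros psi. unfold b'. destruct (excluded_middle_informative (psi = phi)) as [e|n]; [lra|].
      apply div_bounds; [apply Hb| |lra].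
      destruct (excluded_middle_informative (In psi r)) as [i|ni].
      - rewrite <- Sr. auto.
      - destruct (Req_dec (b psi) 0) as [z|nz]; [lra|].
        exfalso; apply ni; apply Hr; auto. }
    assert (Cb' : covers b' r).
    { split; auto. intros psi Hpos. unfold b' in Hpos.
      destruct (excluded_middle_informative (psi = phi)) as [e|n]; [lra|].
      apply Hr; auto. intro z. rewrite z in Hpos. unfold Rdiv in Hpos. lra. }
    assert (Sb' : lsum b' r = 1).
    { rewrite (lsum_ext_in b' (fun psi => b psi * / (1 - p)) r E').
      rewrite lsum_scal, Sr. field. lra. }
    assert (Bb' : is_bet b') by (split; auto; exists r; auto).
    assert (IHb' := IH b' Hb'01 Cb' Sb').
    assert (V' := val_bounds b' u r Hb'01 Hu01 Sb').
    assert (HV : lsum (fun psi => b psi * u psi) r = (1 - p) * lsum (fun psi => b' psi * u psi) r).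
    { rewrite (lsum_ext_in (fun psi => b' psi * u psi) (fun psi => (b psi * u psi) * / (1 - p)) r).
      - rewrite lsum_scal. field. lra.
      - intros psi Hin. rewrite E'; auto. ring. }
    assert (Hmix : b = mix p (prim_bet phi) b').
    { apply functional_extensionality; intro psi. unfold mix, b'.
      destruct (excluded_middle_informative (psi = phi)) as [e|n].
      - subst psi. rewrite prim_same. rewrite <- Hp. ring.
      - rewrite prim_other; auto. field. lra. }
    rewrite HV.
    clearbody b'. subst b.
    apply (lin_indiff pT pF); auto; try lra; try apply prim_bet_is; apply Hu.
Qed.

Lemma axioms_to_u (P : Type) (pT pF : P) pref : AX pT pF pref ->
  exists u : form P -> R,
    (forall phi, 0 <= u phi <= 1) /\ u (Var pT) = 1 /\ u (Var pF) = 0 /\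
    Var pT <> Var pF /\
    (forall b b' s s', is_bet b -> is_bet b' -> covers b s -> covers b' s' ->
      (pref b b' <-> lsum (fun phi => b phi * u phi) s >= lsum (fun phi => b' phi * u phi) s')).
Proof.
  intros H. pose proof H as [[NT1 NT2] _].
  assert (Hex : forall phi : form P, exists al, 0 <= al <= 1 /\ indiff pref (prim_bet phi) (MM pT pF al)).
  { intros phi. apply (exist_level pT pF); auto; try apply prim_bet_is; apply NT1. }
  set (u := fun phi => proj1_sig (constructive_indefinite_description _ (Hex phi))).
  assert (Hu : forall phi, 0 <= u phi <= 1 /\ indiff pref (prim_bet phi) (MM pT pF (u phi))).
  { intros phi. unfold u. exact (proj2_sig (constructive_indefinite_description _ (Hex phi))). }
  assert (Hu01 : forall psi, 0 <= u psi <= 1) by (intros; apply Hu).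
  exists u. split; [auto|]. split; [|split; [|split]].
  - destruct (Hu (Var pT)) as [B [_ K]]. rewrite <- (MM_1 pT pF) in K.
    apply (mono_iff pT pF pref) in K; auto; lra.
  - destruct (Hu (Var pF)) as [B [K _]]. rewrite <- (MM_0 pT pF) in K.
    apply (mono_iff pT pF pref) in K; auto; lra.
  - intro e. destruct NT2 as [A1 A2]. rewrite e in A1, A2. auto.
  - intros b b' s s' Hb Hb' Cs Cs'.
    assert (S1 := bet_cover_sum b s Hb Cs). assert (S2 := bet_cover_sum b' s' Hb' Cs').
    assert (K1 := key pT pF pref u H Hu s b (proj1 Hb) Cs S1).
    assert (K2 := key pT pF pref u H Hu s' b' (proj1 Hb') Cs' S2).
    assert (V1 := val_bounds b u s (proj1 Hb) Hu01 S1).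
    assert (V2 := val_bounds b' u s' (proj1 Hb') Hu01 S2).
    set (v1 := lsum (fun phi => b phi * u phi) s) in *.
    set (v2 := lsum (fun phi => b' phi * u phi) s') in *.
    assert (B1 := MM_bet pT pF v1 V1). assert (B2 := MM_bet pT pF v2 V2).
    destruct K1 as [K11 K12], K2 as [K21 K22].
    assert (EQ : v1 >= v2 <-> v2 <= v1) by (split; intros; lra). rewrite EQ.
    rewrite <- (mono_iff pT pF pref v1 v2 H V1 V2).
    split; intro Q.
    + apply (ax_trans pT pF pref _ b); auto.
      apply (ax_trans pT pF pref _ b'); auto.
    + apply (ax_trans pT pF pref _ (MM pT pF v1)); auto.
      apply (ax_trans pT pF pref _ (MM pT pF v2)); auto.
Qed.

From mathcomp Require Import all_boot all_order all_algebra.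
From mathcomp Require Import all_classical all_reals.
From mathcomp Require Import ereal measure lebesgue_measure.
From mathcomp Require Import Rstruct.
From Stdlib Require Import Reals.
Import Order.TTheory GRing.Theory Num.Theory.

Local Open Scope classical_set_scope.
Local Open Scope ring_scope.

Definition Iset : set (measurableTypeR R) := [set` `[0%R, 1%R[%R ].
Definition lamL (A : R -> Prop) : R := fine (@lebesgue_measure R (A `&` Iset)).
Definition SigL (A : R -> Prop) : Prop := @measurable _ (measurableTypeR R) A.

Lemma SigL_I : SigL Iset.
Proof. exact: measurable_itv. Qed.

Lemma lamL_itv (c : R) : 0 <= c <= 1 -> lebesgue_measure ((fun x => (x < c)%R) `&` Iset) = c%:E.
Proof.
move=> /andP[c0 c1].
have -> : (fun x => (x < c)%R) `&` Iset = [set` `[0%R, c[%R].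
  apply/seteqP; split => x /=; rewrite /Iset /= !in_itv /=.
    move=> [/RltP xc /andP[x0 x1]]; by rewrite x0 xc.
  move=> /andP[x0 xc]; split; first by apply/RltP.
  by rewrite x0 (lt_le_trans xc c1).
rewrite lebesgue_measure_itv /= lte_fin.
case: ltP => h; first by rewrite sube0.
suff -> : c = 0 by [].
by apply/le_anti; rewrite c0 h.
Qed.

Lemma SigL_lt (c : R) : SigL (fun x => Rlt x c).
Proof.
have -> : (fun x => Rlt x c) = [set` `]-oo, c[%R ].
  by apply/seteqP; split => x /=; rewrite in_itv /= => /RltP.
exact: measurable_itv.
Qed.

Lemma lamL_I : lebesgue_measure Iset = 1%:E.
Proof. by rewrite /Iset lebesgue_measure_itv /= lte_fin ltr01 sube0. Qed.

Lemma ebound (x : \bar R) : (0 <= x)%E -> (x <= 1%:E)%E ->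
  x = (fine x)%:E /\ 0 <= fine x <= 1.
Proof. by case: x => [r| |] //=; rewrite !lee_fin => -> ->. Qed.

Lemma lamL_fin A : SigL A ->
  lebesgue_measure (A `&` Iset) = (lamL A)%:E /\ 0 <= lamL A <= 1.
Proof.
move=> mA.
have mAI : SigL (A `&` Iset) by apply: measurableI => //; exact: SigL_I.
have m0 := measure_ge0 (@lebesgue_measure R) (A `&` Iset).
have m1 : (lebesgue_measure (A `&` Iset) <= 1%:E)%E.
  rewrite -lamL_I; apply: le_measure; rewrite ?inE; [exact: mAI|exact: SigL_I|exact: subIsetr].
rewrite /lamL; exact: (ebound _ m0 m1).
Qed.

Lemma SigL_field : Defs.is_field SigL.
Proof.
split; first exact: measurableT.
split; first by move=> A mA; exact: measurableC.
by move=> A B mA mB; exact: measurableU.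
Qed.

Lemma lamL_additive : Defs.additive SigL lamL.
Proof.
move=> A B mA mB dAB.
have [eA _] := lamL_fin _ mA.
have [eB _] := lamL_fin _ mB.
have mU : SigL (fun w => A w \/ B w) by exact: measurableU.
have [eU _] := lamL_fin _ mU.
apply/EFin_inj; rewrite RplusE EFinD -eA -eB -eU.
have -> : (fun w => A w \/ B w) `&` Iset = (A `&` Iset) `|` (B `&` Iset).
  by rewrite -setIUl.
apply: measureU.
- by apply: measurableI => //; exact: SigL_I.
- by apply: measurableI => //; exact: SigL_I.
apply/seteqP; split => x //= [[Ax _] [Bx _]]; exact: (dAB x).
Qed.

Lemma lamL_appraisal : likelihood_appraisal SigL lamL.
Proof.
split.
  move=> A mA; have [_ /andP[h1 h2]] := lamL_fin _ mA; split; exact/RleP.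
split.
  by rewrite /lamL set0I measure0.
by rewrite /lamL setTI lamL_I.
Qed.

From Stdlib Require Import ClassicalEpsilon.

Lemma model_exists (P : Type) (pT pF : P) (u : Defs.form P -> R) :
  Var pT <> Var pF ->
  (forall phi, Rle R0 (u phi) /\ Rle (u phi) R1) ->
  u (Var pT) = R1 -> u (Var pF) = R0 ->
  exists (Omega : Type) (t : Defs.form P -> (Omega -> Prop))
         (Sigma : (Omega -> Prop) -> Prop) (lam : (Omega -> Prop) -> R),
    truth_valuation pT pF t /\ Defs.is_field Sigma /\ (forall phi, Sigma (t phi)) /\
    likelihood_appraisal Sigma lam /\ Defs.additive Sigma lam /\
    (forall phi, lam (t phi) = u phi).
Proof.
move=> nTF ub uT uF.
pose t := fun phi : Defs.form P =>
  if excluded_middle_informative (phi = Var pT) then (fun _ : R => True)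
  else if excluded_middle_informative (phi = Var pF) then (fun _ : R => False)
  else (fun x => Rlt x (u phi)).
have [_ [l0 l1]] := lamL_appraisal.
exists R, t, SigL, lamL; split.
  rewrite /t; split.
    by destruct (excluded_middle_informative (Var pT = Var pT)).
  destruct (excluded_middle_informative (Var pF = Var pT)) as [h|h].
    by case: nTF.
  by destruct (excluded_middle_informative (Var pF = Var pF)).
split; first exact: SigL_field.
split.
  move=> phi; rewrite /t.
  destruct (excluded_middle_informative (phi = Var pT)) as [h|h].
    exact: measurableT.
  destruct (excluded_middle_informative (phi = Var pF)) as [h2|h2].
    exact: measurable0.
  exact: SigL_lt.
split; first exact: lamL_appraisal.
split; first exact: lamL_additive.
move=> phi; rewrite /t.
destruct (excluded_middle_informative (phi = Var pT)) as [->|h]; first by rewrite l1 uT.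
destruct (excluded_middle_informative (phi = Var pF)) as [->|h2]; first by rewrite l0 uF.
have [h0 h1] := ub phi.
by rewrite /lamL lamL_itv //; apply/andP; split; apply/RleP.
Qed.

Theorem proposition1 (P : Type)
  (pT pF : P) (pref : (Defs.form P -> R) -> (Defs.form P -> R) -> Prop) :
  (NonTriviality pT pF pref /\ ObjectiveEU pref) <->
  additive_subjective_representation pT pF pref.
Proof.
split.
- move=> H.
  have [u [u01 [uT [uF [nTF Hrep]]]]] := axioms_to_u _ _ _ _ H.
  have u01' : forall phi, Rle R0 (u phi) /\ Rle (u phi) R1 by exact: u01.
  have [Omega [t [Sigma [lam [tv [fi [Ht [la [ad Hl]]]]]]]]] :=
    model_exists _ _ _ _ nTF u01' uT uF.
  exists Omega, t, Sigma, lam.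
  split; first exact: tv.
  split; first exact: fi.
  split; first exact: Ht.
  split; first exact: la.
  split; first exact: ad.
  move=> b b' Hb Hb' s s' Cs Cs'.
  have Eu : (fun phi => lam (t phi)) = u.
    by apply: functional_extensionality => phi; exact: Hl.
  rewrite Eu.
  exact: (Hrep b b' s s' Hb Hb' Cs Cs').
- exact: rep_to_axioms.
Qed.
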